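(* Let $\mathbb X=\langle X,\rho\rangle$ be the Rado graph (countable random graph; $\rho$ symmetric irreflexive), let $x,y\in X$ with $\langle x,y\rangle\in\rho$, and let $\mathbb Y=\langle X,\sigma\rangle$ where $\sigma=\rho\setminus\{\langle x,y\rangle\}$. Then $\mathbb X\sim_c\mathbb Y$ and $\mathbb X\not\equiv\mathbb Y$.
   Context: The language has one binary relation symbol. A condensation from $\langle X,\rho\rangle$ onto $\langle Y,\sigma\rangle$ is a bijection $F:X\to Y$ with $\langle a,b\rangle\in\rho\Rightarrow\langle F(a),F(b)\rangle\in\sigma$; $\mathbb X\sim_c\mathbb Y$ means condensations exist in both directions. $\equiv$ denotes first order elementary equivalence. *)

(* Defs.v *)
From Stdlib Require Import List Arith.
Import ListNotations.

Definition countable (X : Type) : Prop :=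
  exists f : X -> nat, forall a b, f a = f b -> a = b.

Definition is_rado_graph (X : Type) (rho : X -> X -> Prop) : Prop :=
  countable X /\
  (forall a b, rho a b -> rho b a) /\
  (forall a, ~ rho a a) /\
  (forall U V : list X, (forall u, In u U -> ~ In u V) ->
     exists z, ~ In z U /\ ~ In z V /\
       (forall u, In u U -> rho z u) /\ (forall v, In v V -> ~ rho z v)).

Definition condensation {X Y : Type} (rho : X -> X -> Prop) (sigma : Y -> Y -> Prop)
  (F : X -> Y) : Prop :=
  (forall a b, F a = F b -> a = b) /\ (forall c, exists a, F a = c) /\
  (forall a b, rho a b -> sigma (F a) (F b)).

Definition condensable {X Y : Type} (rho : X -> X -> Prop) (sigma : Y -> Y -> Prop) : Prop :=
  exists F : X -> Y, condensation rho sigma F.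

Definition cond_equiv {X Y : Type} (rho : X -> X -> Prop) (sigma : Y -> Y -> Prop) : Prop :=
  condensable rho sigma /\ condensable sigma rho.

(* First-order logic with equality and one binary relation symbol R.
   Variables are named by natural numbers. *)
Inductive form : Type :=
| FEq  : nat -> nat -> form
| FRel : nat -> nat -> form
| FBot : form
| FImp : form -> form -> form
| FAll : nat -> form -> form.

Definition upd {X : Type} (e : nat -> X) (i : nat) (a : X) : nat -> X :=
  fun j => if Nat.eqb j i then a else e j.

Fixpoint sat {X : Type} (rho : X -> X -> Prop) (e : nat -> X) (f : form) : Prop :=
  match f with
  | FEq i j => e i = e j
  | FRel i j => rho (e i) (e j)
  | FBot => False
  | FImp f g => sat rho e f -> sat rho e g
  | FAll i f => forall a : X, sat rho (upd e i a) f
  end.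

Fixpoint free (k : nat) (f : form) : Prop :=
  match f with
  | FEq i j | FRel i j => k = i \/ k = j
  | FBot => False
  | FImp f g => free k f \/ free k g
  | FAll i f => k <> i /\ free k f
  end.

Definition sentence (f : form) : Prop := forall k, ~ free k f.

Definition models {X : Type} (rho : X -> X -> Prop) (f : form) : Prop :=
  forall e : nat -> X, sat rho e f.

Definition elem_equiv {X Y : Type} (rho : X -> X -> Prop) (sigma : Y -> Y -> Prop) : Prop :=
  forall f, sentence f -> (models rho f <-> models sigma f).

(* Main.v *)
Require Import Defs.
From Stdlib Require Import List Arith Lia Classical ClassicalEpsilon.
Import ListNotations.

Section BF.
Variable X : Type.

Definition ext (r : X -> X -> Prop) := forall U V : list X,
  (forall u, In u U -> ~ In u V) ->
  exists z, ~ In z U /\ ~ In z V /\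
    (forall u, In u U -> r z u) /\ (forall v, In v V -> ~ r z v).

Definition piso (r s : X -> X -> Prop) (L : list (X*X)) :=
  forall p q, In p L -> In q L ->
    (fst p = fst q <-> snd p = snd q) /\ (r (fst p) (fst q) <-> s (snd p) (snd q)).

Lemma split_lists (r : X -> X -> Prop) (a : X) (L : list (X*X)) :
  exists U V, (forall b, In b U <-> exists a', In (a',b) L /\ r a a') /\
              (forall b, In b V <-> exists a', In (a',b) L /\ ~ r a a').
Proof.
  induction L as [|[a0 b0] L IH].
  - exists [], []; simpl; split; intro b; split; try (intros []; fail); intros [a' [[] _]].
  - destruct IH as [U [V [HU HV]]].
    destruct (classic (r a a0)) as [H|H].
    + exists (b0::U), V; simpl; split; intro b; split.
      * intros [<-|Hb]; [exists a0; auto|]. apply HU in Hb. destruct Hb as [a' [? ?]]; eauto.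
      * intros [a' [[E|Hi] Hr]]; [inversion E; subst; auto|]. right; apply HU; eauto.
      * intros Hb; apply HV in Hb. destruct Hb as [a' [? ?]]; eauto.
      * intros [a' [[E|Hi] Hr]]; [inversion E; subst; tauto|]. apply HV; eauto.
    + exists U, (b0::V); simpl; split; intro b; split.
      * intros Hb; apply HU in Hb. destruct Hb as [a' [? ?]]; eauto.
      * intros [a' [[E|Hi] Hr]]; [inversion E; subst; tauto|]. apply HU; eauto.
      * intros [<-|Hb]; [exists a0; auto|]. apply HV in Hb. destruct Hb as [a' [? ?]]; eauto.
      * intros [a' [[E|Hi] Hr]]; [inversion E; subst; auto|]. right; apply HV; eauto.
Qed.

Variables r s : X -> X -> Prop.
Hypothesis rsym : forall a b, r a b -> r b a.
Hypothesis ssym : forall a b, s a b -> s b a.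
Hypothesis rirr : forall a, ~ r a a.
Hypothesis sirr : forall a, ~ s a a.
Hypothesis sext : ext s.

Lemma forth (L : list (X*X)) (a : X) : piso r s L -> exists b, piso r s ((a,b)::L).
Proof.
  intros HL.
  destruct (classic (exists b, In (a,b) L)) as [[b Hb]|Hn].
  - exists b. intros p q [<-|Hp] [<-|Hq]; auto; apply HL; auto.
  - destruct (split_lists r a L) as [U [V [HU HV]]].
    destruct (sext U V) as [z [zU [zV [Hz1 Hz2]]]].
    { intros u Hu Hv. apply HU in Hu; apply HV in Hv.
      destruct Hu as [a1 [H1 R1]]; destruct Hv as [a2 [H2 R2]].
      destruct (HL _ _ H1 H2) as [[_ E] _]. simpl in E. rewrite E in R1 by reflexivity. tauto. }
    assert (K : forall a' b', In (a',b') L ->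
               (a = a' <-> z = b') /\ (r a a' <-> s z b')).
    { intros a' b' H. destruct (classic (r a a')) as [R|R].
      - assert (In b' U) by (apply HU; eauto).
        split; [split; intro E; subst; [exfalso; eauto| tauto]|split; auto].
      - assert (In b' V) by (apply HV; eauto).
        split; [split; intro E; subst; [exfalso; eauto| tauto]|split; [tauto|]].
        intro S; exfalso; apply (Hz2 b'); auto. }
    exists z. intros [p1 p2] [q1 q2] [E1|Hp] [E2|Hq]; simpl.
    + inversion E1; inversion E2; subst. split; [tauto|split; intro HH; exfalso; [apply (rirr _ HH)|apply (sirr _ HH)]].
    + inversion E1; subst. apply K; auto.
    + inversion E2; subst. destruct (K _ _ Hp) as [[A B] [C D]].
      split; split; intro; [symmetry; apply A; auto|symmetry; apply B; auto|apply ssym, C, rsym; auto|apply rsym, D, ssym; auto].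
    + apply (HL _ _ Hp Hq).
Qed.
End BF.

Definition swap {X} (L : list (X*X)) := map (fun p => (snd p, fst p)) L.

Lemma in_swap {X} (L : list (X*X)) a b : In (a,b) L <-> In (b,a) (swap L).
Proof.
  unfold swap; rewrite in_map_iff; split.
  - intro H; exists (a,b); auto.
  - intros [[c d] [E H]]; simpl in E; inversion E; subst; auto.
Qed.

Lemma piso_swap {X} (r s : X -> X -> Prop) L : piso X r s L -> piso X s r (swap L).
Proof.
  intros H [p1 p2] [q1 q2] Hp Hq; simpl.
  apply in_swap in Hp; apply in_swap in Hq.
  destruct (H _ _ Hp Hq) as [[A B] [C D]]; simpl in *; tauto.
Qed.

Lemma back {X} (r s : X -> X -> Prop)
  (rsym : forall a b, r a b -> r b a) (ssym : forall a b, s a b -> s b a)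
  (rirr : forall a, ~ r a a) (sirr : forall a, ~ s a a) (rext : ext X r)
  (L : list (X*X)) (b : X) : piso X r s L -> exists a, piso X r s ((a,b)::L).
Proof.
  intros HL. destruct (forth X s r ssym rsym sirr rirr rext (swap L) b (piso_swap _ _ _ HL)) as [a Ha].
  exists a. apply piso_swap in Ha. unfold swap in Ha. simpl in Ha.
  replace (map (fun p => (snd p, fst p)) (map (fun p : X * X => (snd p, fst p)) L)) with L in Ha; auto.
  rewrite map_map. rewrite <- map_id at 1. apply map_ext. intros [? ?]; auto.
Qed.

Section Build.
Variable X : Type.
Variables r s : X -> X -> Prop.
Hypothesis rsym : forall a b, r a b -> r b a.
Hypothesis ssym : forall a b, s a b -> s b a.
Hypothesis rirr : forall a, ~ r a a.
Hypothesis sirr : forall a, ~ s a a.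
Hypothesis rext : ext X r.
Hypothesis sext : ext X s.
Variable x0 : X.
Variable f : X -> nat.
Hypothesis finj : forall a b, f a = f b -> a = b.

Definition inh : inhabited X := inhabits x0.
Definition forthf L a := epsilon inh (fun b => piso X r s L -> piso X r s ((a,b)::L)).
Definition backf L b := epsilon inh (fun a => piso X r s L -> piso X r s ((a,b)::L)).
Definition enum n := epsilon inh (fun a => f a = n).

Lemma enum_f a : enum (f a) = a.
Proof. apply finj. unfold enum. apply (epsilon_spec inh (fun c => f c = f a)). eauto. Qed.

Fixpoint build (n : nat) : list (X*X) :=
  match n with
  | 0 => []
  | S n => let L := build n in
           let L1 := (enum n, forthf L (enum n)) :: L in
           (backf L1 (enum n), enum n) :: L1
  end.

Lemma forthf_ok L a : piso X r s L -> piso X r s ((a, forthf L a)::L).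
Proof.
  unfold forthf. apply (epsilon_spec inh (fun b => piso X r s L -> piso X r s ((a,b)::L))).
  destruct (classic (piso X r s L)) as [H|H].
  - destruct (forth X r s rsym ssym rirr sirr sext L a H) as [b Hb]; eauto.
  - exists x0; tauto.
Qed.

Lemma backf_ok L b : piso X r s L -> piso X r s ((backf L b, b)::L).
Proof.
  unfold backf. apply (epsilon_spec inh (fun a => piso X r s L -> piso X r s ((a,b)::L))).
  destruct (classic (piso X r s L)) as [H|H].
  - destruct (back r s rsym ssym rirr sirr rext L b H) as [a Ha]; eauto.
  - exists x0; tauto.
Qed.

Lemma build_piso n : piso X r s (build n).
Proof.
  induction n; simpl.
  - intros p q [].
  - apply backf_ok, forthf_ok, IHn.
Qed.

Lemma build_mono n m p : n <= m -> In p (build n) -> In p (build m).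
Proof.
  induction 1; auto. intro H0. simpl. right; right; auto.
Qed.

Lemma build_dom a : exists b, In (a,b) (build (S (f a))).
Proof. simpl. rewrite enum_f. eexists; right; left; reflexivity. Qed.

Lemma build_ran b : exists a, In (a,b) (build (S (f b))).
Proof. simpl. rewrite enum_f. eexists; left; reflexivity. Qed.

Definition F a := epsilon inh (fun b => In (a,b) (build (S (f a)))).

Lemma F_in a : In (a, F a) (build (S (f a))).
Proof.
  unfold F. apply (epsilon_spec inh (fun b => In (a,b) (build (S (f a))))). apply build_dom.
Qed.

Lemma F_both a b : In (a, F a) (build (S (f a + f b))) /\ In (b, F b) (build (S (f a + f b))).
Proof.
  split; eapply build_mono; try apply F_in; lia.
Qed.

Lemma iso_exists : exists G : X -> X,
  (forall a b, G a = G b -> a = b) /\ (forall c, exists a, G a = c) /\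
  (forall a b, r a b -> s (G a) (G b)).
Proof.
  exists F. split; [|split].
  - intros a b E. destruct (F_both a b) as [H1 H2].
    destruct (build_piso _ _ _ H1 H2) as [[A B] _]. simpl in *. auto.
  - intro c. destruct (build_ran c) as [a Ha]. exists a.
    assert (H1 : In (a, F a) (build (S (f a + f c)))) by (eapply build_mono; [|apply F_in]; lia).
    assert (H2 : In (a, c) (build (S (f a + f c)))) by (eapply build_mono; [|apply Ha]; lia).
    destruct (build_piso _ _ _ H1 H2) as [[A B] _]. simpl in *. auto.
  - intros a b R. destruct (F_both a b) as [H1 H2].
    destruct (build_piso _ _ _ H1 H2) as [_ [C D]]. simpl in *. auto.
Qed.
End Build.

Theorem mainTheorem13 (X : Type) (rho : X -> X -> Prop) (x y : X)
  (Hrado : is_rado_graph X rho) (Hxy : rho x y) :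
  let sigma := fun a b : X => rho a b /\ ~ (a = x /\ b = y) in
  cond_equiv rho sigma /\ ~ elem_equiv rho sigma.
Proof.
  intro sigma.
  destruct Hrado as [[f finj] [rsym [rirr rext]]].
  assert (xy : x <> y) by (intro E; subst; eapply rirr; eauto).
  set (g := fun a b => rho a b /\ ~ (a = x /\ b = y) /\ ~ (a = y /\ b = x)).
  assert (gext : ext X g).
  { intros U V HUV.
    assert (HV' : exists V', (forall v, In v V -> In v V') /\ (forall u, In u U -> ~ In u V')
              /\ (~ In x U -> In x V') /\ (~ In y U -> In y V')).
    { destruct (classic (In x U)) as [Hx|Hx]; destruct (classic (In y U)) as [Hy|Hy].
      - exists V; split; [auto|split; [auto|tauto]].
      - exists (y::V); simpl; split; [auto|split; [|tauto]].
        intros u Hu [E|Hv]; [subst; tauto|eapply HUV; eauto].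
      - exists (x::V); simpl; split; [auto|split; [|tauto]].
        intros u Hu [E|Hv]; [subst; tauto|eapply HUV; eauto].
      - exists (x::y::V); simpl; split; [auto|split; [|tauto]].
        intros u Hu [E|[E|Hv]]; [subst; tauto|subst; tauto|eapply HUV; eauto]. }
    destruct HV' as [V' [H1 [H2 [H3 H4]]]].
    destruct (rext U V' H2) as [z [zU [zV [Hz1 Hz2]]]].
    assert (zx : z <> x) by (intro E; subst; tauto).
    assert (zy : z <> y) by (intro E; subst; tauto).
    exists z. split; [auto|split; [intro; apply zV; auto|split]].
    - intros u Hu. unfold g. split; [auto|split; tauto].
    - intros v Hv [G _]. apply (Hz2 v); auto. }
  assert (gsym : forall a b, g a b -> g b a).
  { unfold g; intros a b [R [A B]]; split; [auto|tauto]. }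
  assert (girr : forall a, ~ g a a) by (unfold g; intros a [R _]; eapply rirr; eauto).
  split; [split|].
  - destruct (iso_exists X rho g rsym gsym rirr girr rext gext x f finj) as [G [A [B C]]].
    exists G. split; [auto|split; [auto|]].
    intros a b R. destruct (C a b R) as [R' [D _]]. split; auto.
  - exists (fun a => a). split; [auto|split; [eauto|]]. intros a b [R _]; auto.
  - intro HE.
    set (phi := FAll 0 (FAll 1 (FImp (FRel 0 1) (FRel 1 0)))).
    assert (Hs : sentence phi) by (intros k; simpl; lia).
    assert (Hm : models rho phi).
    { intros e a b; simpl; unfold upd; simpl. auto. }
    apply HE in Hm; [|exact Hs].
    specialize (Hm (fun _ => x) y x). simpl in Hm; unfold upd in Hm; simpl in Hm.
    destruct Hm as [_ Hn]; [|tauto].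
    split; [auto|intros [E _]; auto].
Qed.
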